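(* Let $I \subseteq R$ be a nonzero $\mathscr{D}(R,V)$-submodule of $R$. There exists a natural number $\ell \geq 0$ such that $I = \pi^\ell R$.
   Context: Let $(V, \pi V, k)$ be a DVR of mixed characteristic $(0,p)$ (i.e. $V$ has characteristic zero, maximal ideal generated by $\pi$, and residue field $k$ of characteristic $p>0$), and let $R$ be either $V[[x_1, \ldots, x_n]]$ or $V[x_1, \ldots, x_n]$ for some $n \geq 0$. $\mathscr{D}(R,V)$ denotes the ring of $V$-linear differential operators on $R$; it is generated over $R$ by the operators $\partial_i^{[t]} = \frac{1}{t!}\frac{\partial^t}{\partial x_i^t}$. *)

(* Defs.v *)
From HB Require Import structures.
From mathcomp Require Import all_boot all_order all_algebra.
From mathcomp Require Import mpoly.
Set Implicit Arguments. Unset Strict Implicit. Unset Printing Implicit Defensive.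
Import Order.TTheory GRing.Theory Num.Theory.
Local Open Scope ring_scope.

Definition is_DVR_uniformizer (V : idomainType) (pi : V) : Prop :=
  [/\ pi != 0, pi \isn't a GRing.unit &
      forall x : V, x != 0 ->
        exists u : V, exists k : nat, u \is a GRing.unit /\ x = u * pi ^+ k].

(* Mixed characteristic (0,p): char V = 0, and the residue field V/piV *)
(* has characteristic p, i.e. p is prime and p lies in pi V.          *)
Definition mixed_char (V : idomainType) (pi : V) (p : nat) : Prop :=
  [/\ [pchar V] =i pred0, prime p & exists c : V, p%:R = pi * c].

(* Formal power series V[[x_1..x_n]]: coefficient functions on       *)
(* monomials 'X_{1..n}.                                              *)
Definition pseries (n : nat) (V : idomainType) := 'X_{1..n} -> V.

Definition ps0 n (V : idomainType) : pseries n V := fun _ => 0.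
Definition psC n (V : idomainType) (c : V) : pseries n V := fun m => if m == 0%MM then c else 0.
Definition ps_add n (V : idomainType) (f g : pseries n V) : pseries n V := fun m => f m + g m.
Definition ps_mul n (V : idomainType) (f g : pseries n V) : pseries n V := fun m =>
  \sum_(a : 'X_{1..n < (mdeg m).+1}) \sum_(b : 'X_{1..n < (mdeg m).+1})
     if ((val a + val b)%MM == m) then f a * g b else 0.
(* divided-power derivative d_i^[t] = (1/t!) d^t/dx_i^t :            *)
(* coefficient of x^m in d_i^[t] f is C(m_i + t, t) f_{m + t e_i}.   *)
Definition ps_dderiv n (V : idomainType) (i : 'I_n) (t : nat) (f : pseries n V) : pseries n V :=
  fun m => 'C(m i + t, t)%:R * f (m + U_(i) *+ t)%MM.

(* I is a nonzero D(R,V)-submodule of R = V[[x]] (D(R,V) is generated  *)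
(* over R by the d_i^[t], so stability = additive subgroup stable     *)
(* under multiplication by R and under all d_i^[t]).                  *)
Definition ps_Dsubmodule n (V : idomainType) (I : pseries n V -> Prop) : Prop :=
  [/\ I (@ps0 n V),
      forall f g, I f -> I g -> I (ps_add f g),
      forall r f, I f -> I (ps_mul r f) &
      forall i t f, I f -> I (ps_dderiv i t f)].

Definition mdderiv n (V : idomainType) (i : 'I_n) (t : nat) (p : {mpoly V[n]})
  : {mpoly V[n]} :=
  \sum_(m <- msupp p) ('C(m i, t)%:R * p@_m) *: 'X_[m - U_(i) *+ t].

Definition mp_Dsubmodule n (V : idomainType) (I : {mpoly V[n]} -> Prop) : Prop :=
  [/\ I 0,
      forall f g, I f -> I g -> I (f + g),
      forall r f, I f -> I (r * f) &
      forall i t f, I f -> I (mdderiv i t f)].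

(* Main.v *)
Require Import Defs.
From mathcomp Require Import all_boot all_order all_algebra.
From mathcomp Require Import mpoly.
From Stdlib Require Import Classical FunctionalExtensionality.
Set Implicit Arguments. Unset Strict Implicit. Unset Printing Implicit Defensive.
Import Order.TTheory GRing.Theory Num.Theory.
Local Open Scope ring_scope.

Section Mnm.
Context {n : nat}.
Implicit Types (m : 'X_{1..n}).

Lemma mnm_pos m : m != 0%MM -> exists i, (0 < m i)%N.
Proof.
move=> nz; case: (boolP [exists i, (0 < m i)%N]) => [/existsP //|].
rewrite negb_exists => /forallP H.
move: nz; rewrite -mdeg_eq0 mdegE big1 //= => i _.
by move: (H i); rewrite lt0n negbK => /eqP.
Qed.

Lemma mnm_split m i : ((m - U_(i) *+ m i) + U_(i) *+ m i)%MM = m.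
Proof.
apply/mnmP => j; rewrite mnmDE mnmBE mulmnE mnm1E.
by case: eqP => [->|_]; rewrite ?mul1n ?mul0n ?subnn ?subn0 ?addn0.
Qed.

Lemma mnm_split_i m i : (m - U_(i) *+ m i)%MM i = 0%N.
Proof. by rewrite mnmBE mulmnE mnm1E eqxx mul1n subnn. Qed.

Lemma mnm_split_deg m i : (0 < m i)%N -> (mdeg (m - U_(i) *+ m i)%MM < mdeg m)%N.
Proof.
move=> h; rewrite -[X in (_ < mdeg X)%N](mnm_split m i) mdegD mdegMn mdeg1 mul1n.
by rewrite -[X in (X < _)%N]addn0 ltn_add2l.
Qed.
End Mnm.

Section PS.
Context {n : nat} {V : idomainType}.
Local Notation ps := (pseries n V).

Lemma bsum1 (d : nat) m0 (F : 'X_{1..n} -> V) : (mdeg m0 < d)%N ->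
  \sum_(a : 'X_{1..n < d}) (if val a == m0 then F (val a) else 0) = F m0.
Proof.
move=> h; pose a0 := BMultinom h.
rewrite (bigD1 a0) //= eqxx big1 ?addr0 // => a ne.
by case: eqP => // ea; case/eqP: ne; apply/val_inj.
Qed.

Lemma ps_mulCl (c : V) (r : ps) m : ps_mul (psC c) r m = c * r m.
Proof.
rewrite /ps_mul.
rewrite (eq_bigr (fun a : 'X_{1..n < (mdeg m).+1} => if val a == 0%MM then c * r m else 0)).
  by rewrite (bsum1 (fun _ => c * r m)) // mdeg0.
move=> a _; rewrite /psC -[bmnm a]/(val a); case: eqP => [->|_].
  rewrite (eq_bigr (fun b : 'X_{1..n < (mdeg m).+1} => if val b == m then c * r (val b) else 0)).
    by rewrite (bsum1 (fun b => c * r b)).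
  by move=> b _; rewrite add0m.
by rewrite big1 // => b _; rewrite mul0r if_same.
Qed.

Lemma ps_mulCr (c : V) (r : ps) m : ps_mul r (psC c) m = r m * c.
Proof.
rewrite /ps_mul.
rewrite (eq_bigr (fun a : 'X_{1..n < (mdeg m).+1} => if val a == m then r (val a) * c else 0)).
  by rewrite (bsum1 (fun a => r a * c)).
move=> a _.
rewrite (eq_bigr (fun b : 'X_{1..n < (mdeg m).+1} => if val b == 0%MM then (if val a == m then r (val a) * c else 0) else 0)).
  by rewrite (bsum1 (fun _ => if val a == m then r (val a) * c else 0)) // mdeg0.
move=> b _; rewrite /psC -[bmnm b]/(val b); case: (eqVneq (val b) 0%MM) => [->|nb]; first by rewrite addm0.
by rewrite mulr0 if_same.
Qed.

Lemma ps_mulZr (r g h : ps) (c : V) m : (forall b, g b = c * h b) ->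
  ps_mul r g m = c * ps_mul r h m.
Proof.
move=> E; rewrite /ps_mul mulr_sumr; apply: eq_bigr => a _.
rewrite mulr_sumr; apply: eq_bigr => b _.
by case: ifP; rewrite ?mulr0 // E mulrCA.
Qed.
End PS.
Section Inv.
Context {n : nat} {V : idomainType}.
Local Notation ps := (pseries n V).
Variables (h : ps) (u : V).

Definition Ssum (m : 'X_{1..n}) (prev : ps) : V :=
  \sum_(a : 'X_{1..n < (mdeg m).+1}) \sum_(b : 'X_{1..n < (mdeg m).+1})
     if ((val a + val b)%MM == m) && (val a != m) then prev (val a) * h (val b) else 0.

Fixpoint approx (d : nat) : ps :=
  match d with
  | 0 => fun _ => 0
  | d'.+1 => fun m => u^-1 * ((m == 0%MM)%:R - Ssum m (approx d'))
  end.

Lemma deg_lt_of (a b m : 'X_{1..n}) : (a + b)%MM = m -> a != m -> (mdeg a < mdeg m)%N.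
Proof.
move=> E ne; rewrite -E mdegD -[X in (X < _)%N]addn0 ltn_add2l lt0n mdeg_eq0.
by apply: contra ne => /eqP b0; rewrite -E b0 addm0.
Qed.

Lemma Ssum_ext m (p1 p2 : ps) : (forall a, (mdeg a < mdeg m)%N -> p1 a = p2 a) ->
  Ssum m p1 = Ssum m p2.
Proof.
move=> H; apply: eq_bigr => a _; apply: eq_bigr => b _.
case: ifP => // /andP[/eqP E ne]; by rewrite (H _ (deg_lt_of E ne)).
Qed.

Lemma approx_stab d : forall m, (mdeg m < d)%N -> approx d m = approx d.+1 m.
Proof.
elim: d => [//|d IH] m lt /=; congr (_ * (_ - _)); apply: Ssum_ext => a la.
apply: IH; exact: leq_trans la _.
Qed.

Lemma approx_stab2 m d k : (mdeg m < d)%N -> approx d m = approx (d + k) m.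
Proof.
move=> lt; elim: k => [|k IH]; first by rewrite addn0.
by rewrite IH addnS approx_stab // (leq_trans lt) // leq_addr.
Qed.

Definition psinv : ps := fun m => approx (mdeg m).+1 m.

Lemma psinv_lt (m a : 'X_{1..n}) : (mdeg a < mdeg m)%N -> psinv a = approx (mdeg m) a.
Proof.
move=> lt; rewrite /psinv (@approx_stab2 a _ (mdeg m - (mdeg a).+1) (ltnSn _)) subnKC //.
Qed.

Lemma psinvP : h 0%MM = u -> u \is a GRing.unit -> forall m, ps_mul psinv h m = psC 1 m.
Proof.
move=> h0 uU m; rewrite /ps_mul.
have split_if : forall (A B : bool) (X : V), (if A then X else 0) =
   (if A && B then X else 0) + (if A && ~~ B then X else 0).
  by move=> [] [] X; rewrite ?addr0 ?add0r.
rewrite (eq_bigr (fun a : 'X_{1..n < (mdeg m).+1} =>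
   \sum_(b : 'X_{1..n < (mdeg m).+1}) (if ((val a + val b)%MM == m) && (val a == m) then psinv (val a) * h (val b) else 0)
  + \sum_(b : 'X_{1..n < (mdeg m).+1}) (if ((val a + val b)%MM == m) && (val a != m) then psinv (val a) * h (val b) else 0))); last first.
  by move=> a _; rewrite -big_split /=; apply: eq_bigr => b _; rewrite (split_if _ (val a == m)).
rewrite big_split /=.
have -> : \sum_(a : 'X_{1..n < (mdeg m).+1}) \sum_(b : 'X_{1..n < (mdeg m).+1})
    (if ((val a + val b)%MM == m) && (val a != m) then psinv (val a) * h (val b) else 0)
    = Ssum m (approx (mdeg m)).
  apply: eq_bigr => a _; apply: eq_bigr => b _.
  case: ifP => // /andP[/eqP E ne]; by rewrite (@psinv_lt m) // (deg_lt_of E ne).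
rewrite (eq_bigr (fun a : 'X_{1..n < (mdeg m).+1} => if val a == m then psinv (val a) * u else 0)).
  rewrite (bsum1 (fun a => psinv a * u)) //.
  rewrite /psinv /= mulrC mulVKr // subrK /psC.
  by case: (m == 0%MM).
move=> a _; case: (eqVneq (val a) m) => [Ea|ne]; last first.
  by rewrite big1 // => b _; rewrite andbF.
rewrite (eq_bigr (fun b : 'X_{1..n < (mdeg m).+1} => if val b == 0%MM then psinv (val a) * h (val b) else 0)).
  by rewrite (bsum1 (fun b => psinv (val a) * h b)) ?mdeg0 // h0.
move=> b _; rewrite andbT -[bmnm a]/(val a) -[bmnm b]/(val b) Ea.
have -> : ((m + val b)%MM == m) = (val b == 0%MM).
  apply/eqP/eqP => [E|->]; last by rewrite addm0.
  by apply: (@addmI n m); rewrite addm0.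
done.
Qed.
End Inv.
Lemma psA {n : nat} {V : idomainType} (I : pseries n V -> Prop) :
  ps_Dsubmodule I -> forall d (m : 'X_{1..n}), (mdeg m <= d)%N ->
  forall f, I f -> exists g, I g /\ g 0%MM = f m.
Proof.
case=> _ _ _ HD; elim=> [|d IH] m lm f If.
  move: lm; rewrite leqn0 mdeg_eq0 => /eqP ->; by exists f.
case: (eqVneq m 0%MM) => [->|nz]; first by exists f.
have [i mi] := mnm_pos nz.
have lt := mnm_split_deg mi.
have [g [Ig g0]] := IH _ (leq_trans (ltnSE (leq_trans lt lm)) (leqnn _)) _ (HD i (m i) f If).
exists g; split => //; rewrite g0 /ps_dderiv mnm_split mnm_split_i add0n binn mul1r //.
Qed.
Lemma mnm_splitt {n : nat} (m : 'X_{1..n}) i t : (t <= m i)%N ->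
  ((m - U_(i) *+ t) + U_(i) *+ t)%MM = m.
Proof.
move=> h; apply/mnmP => j; rewrite mnmDE mnmBE mulmnE mnm1E.
by case: eqP => [<-|_]; rewrite ?mul1n ?mul0n ?subnK ?subn0 ?addn0.
Qed.

Lemma mcoeff_mdderiv {n : nat} {V : idomainType} i t (p : {mpoly V[n]}) k :
  (mdderiv i t p)@_k = 'C(k i + t, t)%:R * p@_(k + U_(i) *+ t)%MM.
Proof.
set K := (k + U_(i) *+ t)%MM.
rewrite /mdderiv raddf_sum /=.
rewrite (eq_bigr (fun m => if m == K then 'C(k i + t, t)%:R * p@_m else 0)); last first.
  move=> m _; rewrite mcoeffZ mcoeffX.
  case: (eqVneq m K) => [->|ne].
    rewrite /K addmK eqxx mnmDE mulmnE mnm1E eqxx mul1n mulr1 //.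
  case: eqP => [E|_]; last by rewrite mulr0.
  have lt : (m i < t)%N.
    rewrite ltnNge; apply/negP => le; case/eqP: ne.
    by rewrite -(mnm_splitt le) E.
  by rewrite bin_small // mul0r mul0r.
case: (boolP (K \in msupp p)) => [KS|KS].
  rewrite (bigD1_seq K) ?msupp_uniq //= eqxx big1 ?addr0 // => m /negbTE -> //.
rewrite big_seq big1; last first.
  by move=> m mS; case: eqP => // E; rewrite -E mS in KS.
by move: KS; rewrite mcoeff_msupp negbK => /eqP ->; rewrite mulr0.
Qed.
Lemma mpA {n : nat} {V : idomainType} (I : {mpoly V[n]} -> Prop) :
  mp_Dsubmodule I -> forall d (m : 'X_{1..n}), (mdeg m <= d)%N ->
  forall f, I f -> (forall m', f@_m' != 0 -> (m <= m')%MM -> m' = m) -> I (f@_m)%:MP.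
Proof.
case=> _ _ _ HD.
have base : forall f : {mpoly V[n]}, (forall m', f@_m' != 0 -> (0 <= m')%MM -> m' = 0%MM) -> I f -> I (f@_0%MM)%:MP.
  move=> f H If; suff <- : f = (f@_0%MM)%:MP by [].
  apply/mpolyP => m'; rewrite mcoeffC; case: (eqVneq m' 0%MM) => [->|ne].
    by rewrite ?eqxx mulr1.
  rewrite ?(negbTE ne) mulr0; apply/eqP/negP => /negP nz.
  case/eqP: ne; apply: H nz _; apply/mnm_lepP => j; by rewrite mnm0E.
elim=> [|d IH] m lm f If H.
  by move: lm H; rewrite leqn0 mdeg_eq0 => /eqP -> H; apply: base.
case: (eqVneq m 0%MM) => [E|nz]; first by subst m; apply: base.
have [i mi] := mnm_pos nz.
have lt := mnm_split_deg mi.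
set k := (m - U_(i) *+ m i)%MM in lt.
have -> : f@_m = (mdderiv i (m i) f)@_k.
  by rewrite mcoeff_mdderiv mnm_split_i add0n binn mul1r mnm_split.
apply: (IH k (leq_trans (ltnSE (leq_trans lt lm)) (leqnn _))) => //; first exact: HD.
move=> k' nz' le'.
rewrite mcoeff_mdderiv in nz'.
have nzf : f@_(k' + U_(i) *+ m i)%MM != 0.
  by apply: contraNneq nz' => ->; rewrite mulr0.
have lem : (m <= k' + U_(i) *+ m i)%MM.
  apply/mnm_lepP => j; rewrite mnmDE mulmnE mnm1E.
  move: (mnm_lepP le' j); rewrite /k mnmBE mulmnE mnm1E.
  by case: (i == j); rewrite /= ?mul1n ?mul0n ?subn0 ?addn0 // leq_subLR addnC.
have := H _ nzf lem; rewrite -{2}(mnm_split m i) => E.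
exact: (@addIm n _ _ _ E).
Qed.

Lemma mpB {n : nat} {V : idomainType} (I : {mpoly V[n]} -> Prop) :
  mp_Dsubmodule I -> forall f, I f -> forall k, I (f@_k)%:MP.
Proof.
move=> HI; have [I0 ID IM _] := HI.
elim/mleadrect => f IH If k.
have [->|nzf] := eqVneq f 0; first by rewrite mcoeff0 mpolyC0.
set M := mlead f.
have IM0 : I (f@_M)%:MP.
  apply: (mpA HI (leqnn _)) => // m' nz le.
  apply: le_anti; rewrite msupp_le_mlead ?mcoeff_msupp //.
  exact: lem_leo.
case: (eqVneq k M) => [->//|neq].
set q := f - f@_M *: 'X_[M].
have Iq : I q.
  have -> : q = f + (- 'X_[M]) * (f@_M)%:MP.
    by rewrite /q mulrC mul_mpolyC scalerN.
  by apply: ID => //; apply: IM.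
have -> : f@_k = q@_k by rewrite /q mcoeffB mcoeffZ mcoeffX eq_sym (negbTE neq) mulr0 subr0.
have [->|nzq] := eqVneq q 0; first by rewrite mcoeff0 mpolyC0.
by apply: IH => //; apply: ltm_mleadD.
Qed.
Lemma ex_min (P : nat -> Prop) : (exists k, P k) -> exists k, P k /\ forall j, P j -> (k <= j)%N.
Proof.
case=> k; elim/ltn_ind: k => k IH Pk.
case: (classic (exists j, P j /\ (j < k)%N)) => [[j [Pj ljk]]|H]; first exact: IH ljk Pj.
exists k; split => // j Pj; rewrite leqNgt; apply/negP => ljk; apply: H; by exists j.
Qed.

Theorem theorem3p2 (V : idomainType) (pi : V) (p n : nat) :
  is_DVR_uniformizer pi -> mixed_char pi p ->
  (* case R = V[[x_1, ..., x_n]] *)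
  (forall I : pseries n V -> Prop,
     ps_Dsubmodule I -> (exists f, I f /\ f <> @ps0 n V) ->
     exists l : nat, forall f, I f <-> exists r, f = ps_mul (@psC n V (pi ^+ l)) r)
  /\
  (* case R = V[x_1, ..., x_n] *)
  (forall I : {mpoly V[n]} -> Prop,
     mp_Dsubmodule I -> (exists f, I f /\ f <> 0) ->
     exists l : nat, forall f, I f <-> exists r, f = (pi ^+ l)%:MP * r).
Proof.
move=> [pi0 _ dvr] _; split.
- move=> I HI [f0 [If0 nz0]]; have [_ _ HM _] := HI.
  have [m0 nzm0] : exists m, f0 m != 0.
    case: (classic (exists m, f0 m != 0)) => // H; exfalso; apply: nz0.
    apply: functional_extensionality => m; rewrite /ps0; apply/eqP/negPn/negP => nzm.
    by apply: H; exists m.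
  pose P k := exists f m u, I f /\ u \is a GRing.unit /\ f m = u * pi ^+ k.
  have [k0 Pk0] : exists k, P k.
    have [u [k [uU E]]] := dvr _ nzm0; by exists k, f0, m0, u.
  have [l [Pl lmin]] := ex_min (ex_intro _ k0 Pk0).
  have divi : forall f m, I f -> exists q, f m == pi ^+ l * q.
    move=> f m If; case: (eqVneq (f m) 0) => [->|nz]; first by exists 0; rewrite mulr0.
    have [u [k [uU E]]] := dvr _ nz.
    have lk : (l <= k)%N by apply: lmin; exists f, m, u.
    by exists (u * pi ^+ (k - l)); rewrite E mulrCA -exprD subnKC.
  have pil0 : pi ^+ l != 0 := expf_neq0 l pi0.
  have Ic : I (psC (pi ^+ l)).
    have [f [m [u [If [uU E]]]]] := Pl.
    have [g [Ig g0]] := psA HI (leqnn (mdeg m)) If.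
    pose h := fun b => xchoose (divi g b Ig).
    have gh : forall b, g b = pi ^+ l * h b := fun b => eqP (xchooseP (divi g b Ig)).
    have h0 : h 0%MM = u by apply: (mulfI pil0); rewrite -gh g0 E mulrC.
    suff <- : ps_mul (psinv h u) g = psC (pi ^+ l) by apply: HM.
    apply: functional_extensionality => m'.
    rewrite (ps_mulZr (psinv h u) m' gh) psinvP // /psC; case: eqP => _; by rewrite ?mulr1 ?mulr0.
  exists l => f; split.
  + move=> If; exists (fun m => xchoose (divi f m If)).
    apply: functional_extensionality => m; rewrite ps_mulCl /=; exact: (eqP (xchooseP (divi f m If))).
  + case=> r ->.
    have -> : ps_mul (psC (pi ^+ l)) r = ps_mul r (psC (pi ^+ l)).
      by apply: functional_extensionality => m; rewrite ps_mulCl ps_mulCr mulrC.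
    exact: HM.
- move=> I HI [f0 [If0 nz0]]; have [_ _ HM _] := HI.
  have nzm0 : f0@_(mlead f0) != 0 by rewrite mleadc_eq0; apply/eqP.
  pose P k := exists f m u, I f /\ u \is a GRing.unit /\ f@_m = u * pi ^+ k.
  have [k0 Pk0] : exists k, P k.
    have [u [k [uU E]]] := dvr _ nzm0; by exists k, f0, (mlead f0), u.
  have [l [Pl lmin]] := ex_min (ex_intro _ k0 Pk0).
  have divi : forall f m, I f -> exists q, f@_m == pi ^+ l * q.
    move=> f m If; case: (eqVneq (f@_m) 0) => [->|nz]; first by exists 0; rewrite mulr0.
    have [u [k [uU E]]] := dvr _ nz.
    have lk : (l <= k)%N by apply: lmin; exists f, m, u.
    by exists (u * pi ^+ (k - l)); rewrite E mulrCA -exprD subnKC.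
  have Ic : I (pi ^+ l)%:MP.
    have [f [m [u [If [uU E]]]]] := Pl.
    have := HM (u^-1)%:MP _ (mpB HI If m).
    by rewrite -rmorphM /= E mulKr.
  exists l => f; split.
  + move=> If; exists (\sum_(m <- msupp f) xchoose (divi f m If) *: 'X_[m]).
    rewrite mul_mpolyC scaler_sumr {1}(mpolyE f); apply: eq_bigr => m _.
    by rewrite scalerA -(eqP (xchooseP (divi f m If))).
  + by case=> r ->; rewrite mulrC; exact: HM.
Qed.
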